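(* For every $n\ge 3$, under the uniform model, $$E_U(\Phi_n)=\binom{n}{2}\left(\frac{1}{2n-3}\,{}_3F_2\!\left(\begin{matrix}2,\ 2,\ 2-n\\ 1,\ 4-2n\end{matrix};2\right)-\frac12\cdot\frac{(2n-2)!!}{(2n-3)!!}\right),$$ where ${}_3F_2(\cdots;2)=\sum_{k=0}^{n-2}\frac{(2)_k(2)_k(2-n)_k}{(1)_k(4-2n)_k}\frac{2^k}{k!}$ with $(a)_k=a(a+1)\cdots(a+k-1)$. Moreover $E_U(\Phi_n)\sim\frac{\sqrt{\pi}}{4}n^{5/2}$ as $n\to\infty$.
   Context: $\mathcal{BT}_n$ is the set of (isomorphism classes of) binary phylogenetic trees with leaves bijectively labeled by $\{1,\dots,n\}$ (rooted, every internal node with exactly two children); $|\mathcal{BT}_n|=(2n-3)!!$. For $T\in\mathcal{BT}_n$, $\Phi(T)=\sum_{1\le i<j\le n}\delta_T(LCA_T(i,j))$, where $\delta_T$ is depth (number of arcs from the root) and $LCA$ is lowest common ancestor. $\Phi_n$ is $\Phi(T)$ for random $T\in\mathcal{BT}_n$. The uniform model gives every tree in $\mathcal{BT}_n$ probability $1/(2n-3)!!$; $E_U$ is expectation under it. $m!!$ denotes the double factorial. *)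

(* Defs.v *)
From Stdlib Require Import Reals Lra Lia Arith List Permutation.
Import ListNotations.
Open Scope R_scope.

(* Rooted binary trees with nat-labelled leaves; children are ordered here,
   isomorphism (swapping children) is handled by [tiso] below. *)
Inductive tree : Type :=
| Leaf : nat -> tree
| Node : tree -> tree -> tree.

Fixpoint leaves (t : tree) : list nat :=
  match t with
  | Leaf i => [i]
  | Node a b => leaves a ++ leaves b
  end.

Definition is_BT (n : nat) (t : tree) : Prop :=
  Permutation (leaves t) (seq 1 n).

Inductive tiso : tree -> tree -> Prop :=
| tiso_leaf i : tiso (Leaf i) (Leaf i)
| tiso_node a b c d : tiso a c -> tiso b d -> tiso (Node a b) (Node c d)
| tiso_swap a b c d : tiso a d -> tiso b c -> tiso (Node a b) (Node c d).

Fixpoint lca_depth (t : tree) (i j : nat) : nat :=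
  match t with
  | Leaf _ => 0
  | Node a b =>
      if (existsb (Nat.eqb i) (leaves a) && existsb (Nat.eqb j) (leaves a))%bool
      then S (lca_depth a i j)
      else if (existsb (Nat.eqb i) (leaves b) && existsb (Nat.eqb j) (leaves b))%bool
      then S (lca_depth b i j)
      else 0
  end.

Definition Phi (n : nat) (t : tree) : nat :=
  fold_right plus 0%nat
    (flat_map (fun i => map (fun j => lca_depth t i j) (seq (S i) (n - i)))
              (seq 1 n)).

(* l is a list of representatives of the isomorphism classes of BT_n,
   one per class. *)
Definition enumerates_BT (n : nat) (l : list tree) : Prop :=
  Forall (is_BT n) l /\
  (forall t, is_BT n t -> exists t', In t' l /\ tiso t t') /\
  ForallOrdPairs (fun a b => ~ tiso a b) l.

(* Mean of Phi over such a list = expectation under the uniform model. *)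
Definition mean_Phi (n : nat) (l : list tree) : R :=
  fold_right Rplus 0 (map (fun t => INR (Phi n t)) l) / INR (length l).

Definition EU_Phi_is (n : nat) (e : R) : Prop :=
  (exists l, enumerates_BT n l) /\
  (forall l, enumerates_BT n l -> mean_Phi n l = e).

Fixpoint dfact (m : nat) : nat :=
  match m with
  | O => 1%nat
  | S O => 1%nat
  | S ((S k) as p) => (m * dfact k)%nat
  end.

Fixpoint poch (a : R) (k : nat) : R :=
  match k with
  | O => 1
  | S k' => poch a k' * (a + INR k')
  end.

Definition F32 (n : nat) : R :=
  sum_f_R0 (fun k => poch 2 k * poch 2 k * poch (2 - INR n) k
                     / (poch 1 k * poch (4 - 2 * INR n) k)
                     * 2 ^ k / INR (fact k)) (n - 2).

Definition EU_formula (n : nat) : R :=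
  C n 2 * (/ (2 * INR n - 3) * F32 n
           - / 2 * (INR (dfact (2 * n - 2)) / INR (dfact (2 * n - 3)))).

(* Main.v *)
Require Import Defs.
From Stdlib Require Import Reals Lra Lia Arith List Permutation FinFun ZArith.
From Coquelicot Require Coquelicot.
Open Scope R_scope.
Import ListNotations.
Open Scope nat_scope.

Lemma tiso_refl t : tiso t t.
Proof. induction t; constructor; auto. Qed.

Lemma tiso_sym t u : tiso t u -> tiso u t.
Proof. induction 1; [constructor | apply tiso_node | apply tiso_swap]; auto. Qed.

Lemma tiso_trans t u : tiso t u -> forall v, tiso u v -> tiso t v.
Proof.
  induction 1; intros v Hv.
  - exact Hv.
  - inversion Hv; subst.
    + apply tiso_node; auto.
    + apply tiso_swap; auto.
  - inversion Hv; subst.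
    + apply tiso_swap; auto.
    + apply tiso_node; auto.
Qed.

Lemma tiso_perm t u : tiso t u -> Permutation (leaves t) (leaves u).
Proof.
  induction 1; simpl.
  - auto.
  - apply Permutation_app; auto.
  - eapply Permutation_trans. apply Permutation_app_comm.
    apply Permutation_app; auto.
Qed.

Lemma mem_In i l : existsb (Nat.eqb i) l = true <-> In i l.
Proof.
  rewrite existsb_exists. split.
  - intros [x [H1 H2]]. apply Nat.eqb_eq in H2. subst; auto.
  - intros H; exists i; split; auto. apply Nat.eqb_refl.
Qed.

Lemma mem_perm i l l' : Permutation l l' -> existsb (Nat.eqb i) l = existsb (Nat.eqb i) l'.
Proof.
  intros H. destruct (existsb (Nat.eqb i) l) eqn:E1; destruct (existsb (Nat.eqb i) l') eqn:E2; auto.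
  - apply mem_In in E1. rewrite <- E2. symmetry. apply mem_In. eapply Permutation_in; eauto.
  - apply mem_In in E2. rewrite <- E1. apply mem_In. eapply Permutation_in. apply Permutation_sym; eauto. auto.
Qed.

Lemma mem_false i l : existsb (Nat.eqb i) l = false <-> ~ In i l.
Proof.
  split.
  - intros H Hi. apply mem_In in Hi. congruence.
  - intros H. destruct (existsb (Nat.eqb i) l) eqn:E; auto. apply mem_In in E. contradiction.
Qed.

Lemma NoDup_app_disj {A} (l1 l2 : list A) x : NoDup (l1 ++ l2) -> In x l1 -> In x l2 -> False.
Proof.
  induction l1; simpl; intros H H1 H2; auto.
  inversion H; subst. destruct H1 as [<-|H1]; eauto.
  apply H4. apply in_or_app; auto.
Qed.

Lemma lca_tiso t u : tiso t u -> NoDup (leaves t) -> forall x y, lca_depth t x y = lca_depth u x y.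
Proof.
  induction 1; intros Hnd x y; simpl in *; auto.
  - pose proof (NoDup_app_remove_r _ _ Hnd) as Ha.
    pose proof (NoDup_app_remove_l _ _ Hnd) as Hb.
    rewrite (mem_perm x _ _ (tiso_perm _ _ H)), (mem_perm y _ _ (tiso_perm _ _ H)),
      (mem_perm x _ _ (tiso_perm _ _ H0)), (mem_perm y _ _ (tiso_perm _ _ H0)).
    rewrite IHtiso1, IHtiso2; auto.
  - pose proof (NoDup_app_remove_r _ _ Hnd) as Ha.
    pose proof (NoDup_app_remove_l _ _ Hnd) as Hb.
    rewrite <- (mem_perm x _ _ (tiso_perm _ _ H)), <- (mem_perm y _ _ (tiso_perm _ _ H)),
      <- (mem_perm x _ _ (tiso_perm _ _ H0)), <- (mem_perm y _ _ (tiso_perm _ _ H0)).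
    rewrite <- IHtiso1, <- IHtiso2; auto.
    destruct (existsb (Nat.eqb x) (leaves a)) eqn:Ea;
    destruct (existsb (Nat.eqb y) (leaves a)) eqn:Eb;
    destruct (existsb (Nat.eqb x) (leaves b)) eqn:Ec;
    destruct (existsb (Nat.eqb y) (leaves b)) eqn:Ed; simpl; auto;
    exfalso; apply mem_In in Ea; apply mem_In in Eb; apply mem_In in Ec; apply mem_In in Ed;
    eapply NoDup_app_disj; eauto.
Qed.

Lemma Phi_tiso n t u : tiso t u -> NoDup (leaves t) -> Phi n t = Phi n u.
Proof.
  intros H Hnd. unfold Phi. f_equal. apply flat_map_ext. intros i.
  apply map_ext. intros j. apply lca_tiso; auto.
Qed.

Fixpoint minl (t : tree) : nat :=
  match t with Leaf i => i | Node a b => Nat.min (minl a) (minl b) end.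

Lemma minl_in t : In (minl t) (leaves t).
Proof.
  induction t; simpl; auto.
  destruct (Nat.min_spec (minl t1) (minl t2)) as [[_ ->]|[_ ->]]; apply in_or_app; auto.
Qed.

Lemma minl_le t x : In x (leaves t) -> minl t <= x.
Proof.
  induction t; simpl; intros H.
  - destruct H as [->|[]]; auto.
  - apply in_app_or in H. destruct H; [specialize (IHt1 H) | specialize (IHt2 H)]; lia.
Qed.

Lemma minl_unique t x : In x (leaves t) -> (forall y, In y (leaves t) -> x <= y) -> minl t = x.
Proof.
  intros H1 H2. pose proof (minl_le _ _ H1). pose proof (H2 _ (minl_in t)). lia.
Qed.

Lemma minl_perm t u : Permutation (leaves t) (leaves u) -> minl t = minl u.
Proof.
  intros H. apply minl_unique.
  - eapply Permutation_in. apply Permutation_sym; eauto. apply minl_in.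
  - intros y Hy. apply minl_le. eapply Permutation_in; eauto.
Qed.

Lemma minl_tiso t u : tiso t u -> minl t = minl u.
Proof. intros H; apply minl_perm, tiso_perm, H. Qed.

Fixpoint canon (t : tree) : Prop :=
  match t with Leaf _ => True | Node a b => canon a /\ canon b /\ minl a < minl b end.

Fixpoint norm (t : tree) : tree :=
  match t with
  | Leaf i => Leaf i
  | Node a b => let a' := norm a in let b' := norm b in
      if minl a' <? minl b' then Node a' b' else Node b' a'
  end.

Lemma norm_tiso t : tiso t (norm t).
Proof.
  induction t; simpl. constructor.
  destruct (minl (norm t1) <? minl (norm t2)).
  - apply tiso_node; auto.
  - apply tiso_swap; auto.
Qed.

Lemma canon_norm t : NoDup (leaves t) -> canon (norm t).
Proof.
  induction t; simpl; auto. intros Hnd.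
  pose proof (NoDup_app_remove_r _ _ Hnd) as Ha.
  pose proof (NoDup_app_remove_l _ _ Hnd) as Hb.
  rewrite <- (minl_tiso _ _ (norm_tiso t1)), <- (minl_tiso _ _ (norm_tiso t2)).
  assert (minl t1 <> minl t2).
  { intros E. eapply (NoDup_app_disj (leaves t1) (leaves t2) (minl t1)); auto.
    apply minl_in. rewrite E; apply minl_in. }
  destruct (minl t1 <? minl t2) eqn:E; simpl.
  - apply Nat.ltb_lt in E. repeat split; auto;
    rewrite <- (minl_tiso _ _ (norm_tiso t1)), <- (minl_tiso _ _ (norm_tiso t2)); lia.
  - apply Nat.ltb_ge in E. repeat split; auto;
    rewrite <- (minl_tiso _ _ (norm_tiso t1)), <- (minl_tiso _ _ (norm_tiso t2)); lia.
Qed.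

Lemma canon_tiso_eq t u : tiso t u -> canon t -> canon u -> t = u.
Proof.
  induction 1; simpl; intros Ht Hu; auto.
  - f_equal; intuition.
  - exfalso. rewrite (minl_tiso _ _ H), (minl_tiso _ _ H0) in Ht. lia.
Qed.

Lemma canon_norm_id t : canon t -> NoDup (leaves t) -> norm t = t.
Proof.
  intros Hc Hnd. symmetry. apply canon_tiso_eq; auto. apply norm_tiso. apply canon_norm; auto.
Qed.

Fixpoint ins (t : tree) (k : nat) : list tree :=
  match t with
  | Leaf i => [Node (Leaf i) (Leaf k)]
  | Node a b => Node (Node a b) (Leaf k) ::
      map (fun x => Node x b) (ins a k) ++ map (fun x => Node a x) (ins b k)
  end.

Fixpoint Cn (n : nat) : list tree :=
  match n with
  | 0 => []
  | S p => match p with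
           | 0 => [Leaf 1]
           | _ => flat_map (fun t => ins t n) (Cn p)
           end
  end.

Lemma Cn_S p : 1 <= p -> Cn (S p) = flat_map (fun t => ins t (S p)) (Cn p).
Proof. destruct p; [lia|reflexivity]. Qed.

Lemma ins_leaves t k x : In x (ins t k) -> Permutation (leaves x) (leaves t ++ [k]).
Proof.
  revert x; induction t; simpl; intros x H.
  - destruct H as [<-|[]]; simpl; auto.
  - destruct H as [<-|H]; simpl; auto.
    apply in_app_or in H; destruct H as [H|H]; apply in_map_iff in H; destruct H as [y [<- Hy]]; simpl.
    + rewrite <- app_assoc. eapply Permutation_trans.
      apply Permutation_app_tail. apply IHt1; auto.
      rewrite <- app_assoc. apply Permutation_app_head. apply Permutation_app_comm.
    + rewrite <- app_assoc. apply Permutation_app_head. apply IHt2; auto.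
Qed.

Lemma ins_length t k : length (ins t k) = 2 * length (leaves t) - 1.
Proof.
  induction t; simpl; auto.
  rewrite length_app, !length_map, IHt1, IHt2, length_app.
  assert (0 < length (leaves t1)) by (destruct (leaves t1) eqn:E; [pose proof (minl_in t1); rewrite E in H; destruct H|simpl; lia]).
  assert (0 < length (leaves t2)) by (destruct (leaves t2) eqn:E; [pose proof (minl_in t2); rewrite E in H0; destruct H0|simpl; lia]).
  lia.
Qed.

Lemma ins_minl t k x : In x (ins t k) -> (forall y, In y (leaves t) -> y < k) -> minl x = minl t.
Proof.
  intros H Hk. apply minl_unique.
  - eapply Permutation_in. apply Permutation_sym, ins_leaves; eauto. apply in_or_app; left; apply minl_in.
  - intros y Hy. eapply Permutation_in in Hy; [|apply ins_leaves; eauto].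
    apply in_app_or in Hy; destruct Hy as [Hy|[<-|[]]].
    + apply minl_le; auto.
    + apply Nat.lt_le_incl, Hk, minl_in.
Qed.

Lemma ins_canon t k x : In x (ins t k) -> canon t -> (forall y, In y (leaves t) -> y < k) -> canon x.
Proof.
  revert x; induction t; simpl; intros x H Hc Hk.
  - destruct H as [<-|[]]; simpl; auto.
  - destruct H as [<-|H]; simpl.
    + repeat split; try tauto. apply Nat.min_lt_iff. left. apply Hk. apply in_or_app; left; apply minl_in.
    + apply in_app_or in H; destruct H as [H|H]; apply in_map_iff in H; destruct H as [y [<- Hy]]; simpl.
      * rewrite (ins_minl _ _ _ Hy). repeat split; try tauto. apply IHt1; auto; try tauto.
        intros; apply Hk, in_or_app; auto. intros; apply Hk, in_or_app; auto.
      * rewrite (ins_minl _ _ _ Hy). repeat split; try tauto. apply IHt2; auto; try tauto.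
        intros; apply Hk, in_or_app; auto. intros; apply Hk, in_or_app; auto.
Qed.

Lemma BT_NoDup n t : is_BT n t -> NoDup (leaves t).
Proof. intros H. eapply Permutation_NoDup. apply Permutation_sym, H. apply seq_NoDup. Qed.

Lemma BT_length n t : is_BT n t -> length (leaves t) = n.
Proof. intros H. rewrite (Permutation_length H). apply length_seq. Qed.

Lemma Cn_prop n x : 1 <= n -> In x (Cn n) -> is_BT n x /\ canon x.
Proof.
  revert x; induction n as [|p IH]; intros x Hn H. lia.
  destruct (Nat.eq_dec p 0) as [->|Hp].
  - simpl in H. destruct H as [<-|[]]. split; simpl; auto. unfold is_BT; simpl; auto.
  - rewrite Cn_S in H by lia. apply in_flat_map in H. destruct H as [t [Ht Hx]].
    destruct (IH t ltac:(lia) Ht) as [Hb Hc]. split.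
    + unfold is_BT. eapply Permutation_trans. apply ins_leaves; eauto.
      rewrite seq_S. simpl. apply Permutation_app_tail. auto.
    + eapply ins_canon; eauto. intros y Hy. eapply Permutation_in in Hy; [|apply Hb].
      apply in_seq in Hy. lia.
Qed.

Lemma flat_map_length_const {A B} (f : A -> list B) l c :
  (forall x, In x l -> length (f x) = c) -> length (flat_map f l) = c * length l.
Proof.
  induction l; simpl; intros H. lia.
  rewrite length_app, H, IHl; auto. lia.
Qed.

Lemma dfact_SS k : dfact (S (S k)) = S (S k) * dfact k.
Proof. reflexivity. Qed.

Lemma Cn_length n : 1 <= n -> length (Cn n) = dfact (2 * n - 3).
Proof.
  induction n as [|p IH]; intros Hn. lia.
  destruct (Nat.eq_dec p 0) as [->|Hp]. reflexivity.
  rewrite Cn_S by lia. rewrite (flat_map_length_const _ _ (2 * p - 1)).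
  - rewrite IH by lia. destruct p as [|[|q]]. lia. reflexivity.
    replace (2 * S (S (S q)) - 3) with (S (S (2 * S (S q) - 3))) by lia.
    rewrite dfact_SS. f_equal. lia.
  - intros t Ht. rewrite ins_length. destruct (Cn_prop p t ltac:(lia) Ht) as [Hb _].
    rewrite (BT_length _ _ Hb). lia.
Qed.

Definition isleafk (k : nat) (t : tree) : bool :=
  match t with Leaf j => Nat.eqb j k | _ => false end.

Fixpoint del (t : tree) (k : nat) : tree :=
  match t with
  | Leaf i => Leaf i
  | Node a b => if isleafk k b then a
                else if existsb (Nat.eqb k) (leaves a) then Node (del a k) b
                else Node a (del b k)
  end.

Lemma ins_node t k x : In x (ins t k) -> exists u v, x = Node u v.
Proof.
  destruct t; simpl; intros H.
  - destruct H as [<-|[]]; eauto.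
  - destruct H as [<-|H]; eauto. apply in_app_or in H; destruct H as [H|H];
    apply in_map_iff in H; destruct H as [y [<- _]]; eauto.
Qed.

Lemma del_ins t k x : In x (ins t k) -> ~ In k (leaves t) -> del x k = t.
Proof.
  revert x; induction t; simpl; intros x H Hk.
  - destruct H as [<-|[]]; simpl. rewrite Nat.eqb_refl; auto.
  - destruct H as [<-|H]; simpl. rewrite Nat.eqb_refl; auto.
    apply in_app_or in H; destruct H as [H|H];
    apply in_map_iff in H; destruct H as [y [<- Hy]]; simpl.
    + assert (isleafk k t2 = false).
      { destruct t2; simpl; auto. apply Nat.eqb_neq. intros ->. apply Hk. apply in_or_app; simpl; auto. }
      rewrite H. assert (existsb (Nat.eqb k) (leaves y) = true).
      { apply mem_In. eapply Permutation_in. apply Permutation_sym, ins_leaves; eauto. apply in_or_app; simpl; auto. }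
      rewrite H0. rewrite IHt1; auto. intros Hh; apply Hk, in_or_app; auto.
    + destruct (ins_node _ _ _ Hy) as [u [v ->]]. simpl.
      assert (existsb (Nat.eqb k) (leaves t1) = false).
      { apply mem_false. intros Hh; apply Hk, in_or_app; auto. }
      rewrite H. f_equal. transitivity (del (Node u v) k); [reflexivity|]. apply IHt2; auto. intros Hh; apply Hk, in_or_app; auto.
Qed.

Lemma tree_neq_node a b : a <> Node a b.
Proof.
  revert b; induction a; intros b H; try discriminate. injection H; intros _ H1. eapply IHa1; eauto.
Qed.

Lemma ins_NoDup t k : ~ In k (leaves t) -> NoDup (ins t k).
Proof.
  intros Hk. induction t; simpl.
  - constructor; auto. constructor.
  - assert (Ha : ~ In k (leaves t1)) by (intros H; apply Hk; simpl; apply in_or_app; auto).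
    assert (Hb : ~ In k (leaves t2)) by (intros H; apply Hk; simpl; apply in_or_app; auto).
    constructor.
    + intros H. apply in_app_or in H; destruct H as [H|H];
      apply in_map_iff in H; destruct H as [y [E Hy]].
      * injection E; intros; subst. apply Hb; simpl; auto.
      * injection E; intros; subst. eapply tree_neq_node; eauto.
    + apply NoDup_app.
      * apply Injective_map_NoDup; auto. intros u v E; injection E; auto.
      * apply Injective_map_NoDup; auto. intros u v E; injection E; auto.
      * intros x H1 H2. apply in_map_iff in H1, H2. destruct H1 as [y [<- Hy]], H2 as [z [E Hz]].
        injection E; intros; subst. apply Ha. eapply Permutation_in. apply Permutation_sym.
        apply (ins_leaves _ _ _ Hy). apply in_or_app; simpl; auto.
Qed.

Lemma NoDup_flat_map {A B} (f : A -> list B) l :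
  NoDup l -> (forall x, In x l -> NoDup (f x)) ->
  (forall x y z, In x l -> In y l -> In z (f x) -> In z (f y) -> x = y) ->
  NoDup (flat_map f l).
Proof.
  induction l as [|a l IH]; simpl; intros H1 H2 H3. constructor.
  inversion H1; subst. apply NoDup_app.
  - auto.
  - apply IH; auto. intros; eapply H3; eauto.
  - intros z Hz Hz'. apply in_flat_map in Hz'. destruct Hz' as [y [Hy Hzy]].
    assert (a = y) by (eapply H3; eauto). subst. contradiction.
Qed.

Lemma Cn_NoDup n : NoDup (Cn n).
Proof.
  induction n as [|p IH]. constructor.
  destruct (Nat.eq_dec p 0) as [->|Hp]. repeat constructor; auto.
  rewrite Cn_S by lia. apply NoDup_flat_map; auto.
  - intros t Ht. apply ins_NoDup. destruct (Cn_prop p t ltac:(lia) Ht) as [Hb _].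
    intros H. eapply Permutation_in in H; [|apply Hb]. apply in_seq in H. lia.
  - intros t u z Ht Hu H1 H2.
    assert (forall w, In w (Cn p) -> ~ In (S p) (leaves w)).
    { intros w Hw H. destruct (Cn_prop p w ltac:(lia) Hw) as [Hb _].
      eapply Permutation_in in H; [|apply Hb]. apply in_seq in H. lia. }
    rewrite <- (del_ins t (S p) z), <- (del_ins u (S p) z); auto.
Qed.

Lemma leaves_nonempty t : 1 <= length (leaves t).
Proof. pose proof (minl_in t). destruct (leaves t); simpl in *; [destruct H|lia]. Qed.

Lemma ins_head a k : In (Node a (Leaf k)) (ins a k).
Proof. destruct a; simpl; auto. Qed.

Lemma minl_del u a k : Permutation (leaves u ++ [k]) (leaves a) ->
  (forall y, In y (leaves a) -> y <= k) -> minl u = minl a.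
Proof.
  intros H Hk. symmetry. apply minl_unique.
  - eapply Permutation_in. apply H. apply in_or_app; left; apply minl_in.
  - intros y Hy. eapply Permutation_in in Hy; [|apply Permutation_sym, H].
    apply in_app_or in Hy. destruct Hy as [Hy|[<-|[]]].
    + apply minl_le; auto.
    + apply Hk. eapply Permutation_in. apply H. apply in_or_app; left; apply minl_in.
Qed.

Lemma del_spec t k : canon t -> NoDup (leaves t) -> In k (leaves t) ->
  (forall y, In y (leaves t) -> y <= k) -> 2 <= length (leaves t) ->
  In t (ins (del t k) k) /\ Permutation (leaves (del t k) ++ [k]) (leaves t) /\ canon (del t k).
Proof.
  induction t as [j|a IHa b IHb]; simpl; intros Hc Hnd Hk Hle Hl. lia.
  pose proof (NoDup_app_remove_r _ _ Hnd) as Ha.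
  pose proof (NoDup_app_remove_l _ _ Hnd) as Hb.
  destruct (isleafk k b) eqn:Eb.
  - destruct b as [j|]; simpl in Eb; try discriminate. apply Nat.eqb_eq in Eb; subst.
    split; [apply ins_head|]. split; [simpl; auto|tauto].
  - destruct (existsb (Nat.eqb k) (leaves a)) eqn:Ea.
    + apply mem_In in Ea.
      assert (La : 2 <= length (leaves a)).
      { destruct a as [j|a1 a2]; simpl in *.
        - destruct Ea as [<-|[]]. exfalso.
          assert (minl b <= j) by (apply Hle; right; apply minl_in).
          lia.
        - rewrite length_app. pose proof (leaves_nonempty a1). pose proof (leaves_nonempty a2). lia. }
      destruct IHa as [H1 [H2 H3]]; try tauto.
      { intros y Hy; apply Hle, in_or_app; auto. }
      split; [|split].
      * simpl. right. apply in_or_app; left. apply in_map_iff. exists a; auto.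
      * simpl. rewrite <- app_assoc. eapply Permutation_trans.
        apply Permutation_app_head. apply Permutation_app_comm.
        rewrite app_assoc. apply Permutation_app_tail. auto.
      * simpl. rewrite (minl_del _ _ _ H2). tauto. intros y Hy; apply Hle, in_or_app; auto.
    + apply mem_false in Ea.
      assert (Ek : In k (leaves b)) by (apply in_app_or in Hk; tauto).
      assert (Lb : 2 <= length (leaves b)).
      { destruct b as [j|b1 b2]; simpl in *.
        - destruct Ek as [<-|[]]. rewrite Nat.eqb_refl in Eb. discriminate.
        - rewrite length_app. pose proof (leaves_nonempty b1). pose proof (leaves_nonempty b2). lia. }
      destruct IHb as [H1 [H2 H3]]; try tauto.
      { intros y Hy; apply Hle, in_or_app; auto. }
      split; [|split].
      * simpl. right. apply in_or_app; right. apply in_map_iff. exists b; auto.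
      * simpl. rewrite <- app_assoc. apply Permutation_app_head. auto.
      * simpl. rewrite (minl_del _ _ _ H2). tauto. intros y Hy; apply Hle, in_or_app; auto.
Qed.

Lemma Cn_complete n t : 1 <= n -> is_BT n t -> canon t -> In t (Cn n).
Proof.
  revert t; induction n as [|p IH]; intros t Hn Hb Hc. lia.
  destruct (Nat.eq_dec p 0) as [->|Hp].
  - destruct t as [j|a b].
    + unfold is_BT in Hb. simpl in Hb. apply Permutation_length_1 in Hb. subst. simpl; auto.
    + exfalso. apply BT_length in Hb. simpl in Hb. rewrite length_app in Hb.
      pose proof (leaves_nonempty a). pose proof (leaves_nonempty b). lia.
  - rewrite Cn_S by lia. apply in_flat_map.
    assert (Hnd := BT_NoDup _ _ Hb).
    destruct (del_spec t (S p)) as [H1 [H2 H3]]; auto.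
    + eapply Permutation_in. apply Permutation_sym, Hb. apply in_seq. lia.
    + intros y Hy. eapply Permutation_in in Hy; [|apply Hb]. apply in_seq in Hy. lia.
    + rewrite (BT_length _ _ Hb). lia.
    + exists (del t (S p)). split; auto. apply IH; auto. lia.
      unfold is_BT. apply (Permutation_app_inv_r [S p]).
      eapply Permutation_trans. apply H2. eapply Permutation_trans. apply Hb.
      rewrite seq_S. apply Permutation_refl.
Qed.

Lemma ForallOrdPairs_cons_inv {A} (R : A -> A -> Prop) a l :
  ForallOrdPairs R (a :: l) -> Forall (R a) l /\ ForallOrdPairs R l.
Proof. intros H; inversion H; auto. Qed.

Lemma enum_perm n l : 1 <= n -> enumerates_BT n l -> Permutation (map norm l) (Cn n).
Proof.
  intros Hn [Hf [Hcov Hp]]. apply NoDup_Permutation.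
  - clear Hcov. induction l as [|a l IH]; simpl. constructor.
    apply ForallOrdPairs_cons_inv in Hp. destruct Hp as [Hp1 Hp2].
    inversion Hf; subst. constructor; auto.
    intros H. apply in_map_iff in H. destruct H as [b [E Hb]].
    rewrite Forall_forall in Hp1. apply (Hp1 b Hb).
    eapply tiso_trans. apply norm_tiso. rewrite <- E. apply tiso_sym, norm_tiso.
  - apply Cn_NoDup.
  - intros x. split; intros H.
    + apply in_map_iff in H. destruct H as [t [<- Ht]]. rewrite Forall_forall in Hf.
      specialize (Hf t Ht). apply Cn_complete; auto.
      * unfold is_BT. eapply Permutation_trans. apply Permutation_sym, tiso_perm, norm_tiso. apply Hf.
      * apply canon_norm. eapply BT_NoDup; eauto.
    + destruct (Cn_prop n x Hn H) as [Hb Hc]. destruct (Hcov x Hb) as [t [Ht Hxt]].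
      apply in_map_iff. exists t. split; auto.
      rewrite Forall_forall in Hf. specialize (Hf t Ht).
      symmetry. apply canon_tiso_eq; auto.
      * eapply tiso_trans. apply Hxt. apply norm_tiso.
      * apply canon_norm. eapply BT_NoDup; eauto.
Qed.

Lemma enum_Cn n : 1 <= n -> enumerates_BT n (Cn n).
Proof.
  intros Hn. split; [|split].
  - rewrite Forall_forall. intros x Hx. apply (Cn_prop n x Hn Hx).
  - intros t Ht. exists (norm t). split.
    + apply Cn_complete; auto.
      * unfold is_BT. eapply Permutation_trans. apply Permutation_sym, tiso_perm, norm_tiso. apply Ht.
      * apply canon_norm. eapply BT_NoDup; eauto.
    + apply norm_tiso.
  - pose proof (Cn_NoDup n) as Hnd. assert (Hall := fun x => Cn_prop n x Hn).
    induction (Cn n) as [|a l IH]; constructor.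
    + inversion Hnd; subst. rewrite Forall_forall. intros b Hb Hab.
      apply H1. replace a with b; auto. apply canon_tiso_eq.
      apply tiso_sym; auto. apply Hall; simpl; auto. apply Hall; simpl; auto.
    + inversion Hnd; subst. apply IH; auto. intros; apply Hall; simpl; auto.
Qed.

Lemma sumR_perm (l l' : list R) : Permutation l l' ->
  fold_right Rplus 0%R l = fold_right Rplus 0%R l'.
Proof. induction 1; simpl; try lra. Qed.

Lemma mean_enum n l : 1 <= n -> enumerates_BT n l -> mean_Phi n l = mean_Phi n (Cn n).
Proof.
  intros Hn He. pose proof (enum_perm n l Hn He) as Hp. unfold mean_Phi.
  rewrite <- (Permutation_length Hp), length_map. f_equal.
  rewrite <- (sumR_perm _ _ (Permutation_map (fun t => INR (Phi n t)) Hp)).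
  rewrite map_map. f_equal. apply map_ext_in. intros t Ht.
  destruct He as [Hf _]. rewrite Forall_forall in Hf.
  rewrite <- (Phi_tiso n t (norm t)); auto. apply norm_tiso. eapply BT_NoDup; eauto.
Qed.

Import ListNotations.
Open Scope R_scope.

Definition sumR (l : list R) : R := fold_right Rplus 0 l.

Lemma sumR_app l1 l2 : sumR (l1 ++ l2) = sumR l1 + sumR l2.
Proof. induction l1; simpl; unfold sumR in *; simpl; try rewrite IHl1; lra. Qed.

Lemma sumR_lin {A} (f g : A -> R) c l :
  sumR (map (fun x => c * f x + g x) l) = c * sumR (map f l) + sumR (map g l).
Proof. induction l; unfold sumR in *; simpl; try rewrite IHl; lra. Qed.

Lemma sumR_plus {A} (f g : A -> R) l :
  sumR (map (fun x => f x + g x) l) = sumR (map f l) + sumR (map g l).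
Proof. induction l; unfold sumR in *; simpl; try rewrite IHl; lra. Qed.

Lemma sumR_const {A} (d : R) (l : list A) : sumR (map (fun _ => d) l) = INR (length l) * d.
Proof. induction l; unfold sumR in *; cbn [map fold_right length]. simpl; lra. rewrite IHl, S_INR; lra. Qed.

Lemma sumR_ext {A} (f g : A -> R) l : (forall x, In x l -> f x = g x) -> sumR (map f l) = sumR (map g l).
Proof. intros H. f_equal. apply map_ext_in. auto. Qed.

Lemma sumR_flat_map {A B} (f : B -> R) (g : A -> list B) l :
  sumR (map f (flat_map g l)) = sumR (map (fun t => sumR (map f (g t))) l).
Proof. induction l; simpl. reflexivity. rewrite map_app, sumR_app, IHl. reflexivity. Qed.

Lemma INR_fold_plus l : INR (fold_right plus 0%nat l) = sumR (map INR l).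
Proof. induction l; simpl. reflexivity. rewrite plus_INR, IHl. reflexivity. Qed.

Definition nl (t : tree) : R := INR (length (leaves t)).
Definition C2 (x : R) : R := x * (x - 1) / 2.

Fixpoint PR (t : tree) : R :=
  match t with Leaf _ => 0 | Node a b => C2 (nl a) + PR a + C2 (nl b) + PR b end.
Fixpoint SR (t : tree) : R :=
  match t with Leaf _ => 0 | Node a b => nl a + SR a + nl b + SR b end.

Lemma nl_node a b : nl (Node a b) = nl a + nl b.
Proof. unfold nl; simpl. rewrite length_app, plus_INR. reflexivity. Qed.

Lemma nl_ins t k x : In x (ins t k) -> nl x = nl t + 1.
Proof.
  intros H. unfold nl. rewrite (Permutation_length (ins_leaves _ _ _ H)), length_app, plus_INR. simpl. lra.
Qed.

Lemma len_ins t k : INR (length (ins t k)) = 2 * nl t - 1.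
Proof.
  rewrite ins_length. unfold nl. pose proof (leaves_nonempty t).
  rewrite minus_INR by lia. rewrite mult_INR. simpl. lra.
Qed.

Lemma IS_lemma t k : sumR (map SR (ins t k)) = (2 * nl t + 2) * SR t + nl t + 1.
Proof.
  induction t as [j|a IHa b IHb].
  - simpl. unfold sumR, nl; simpl. lra.
  - cbn [ins map]. unfold sumR at 1. cbn [fold_right]. fold (sumR (map SR (map (fun x => Node x b) (ins a k) ++ map (fun x => Node a x) (ins b k)))).
    rewrite map_app, sumR_app, !map_map.
    rewrite (sumR_ext _ (fun x => 1 * SR x + (nl a + 1 + nl b + SR b))).
    2:{ intros x Hx. simpl. rewrite (nl_ins _ _ _ Hx). lra. }
    rewrite (sumR_ext (fun x => SR (Node a x)) (fun x => 1 * SR x + (nl a + SR a + nl b + 1))).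
    2:{ intros x Hx. simpl. rewrite (nl_ins _ _ _ Hx). lra. }
    rewrite !sumR_lin, !sumR_const, !len_ins, IHa, IHb.
    simpl SR. rewrite !nl_node. replace (nl (Leaf k)) with 1 by (unfold nl; simpl; lra). ring.
Qed.

Lemma IP_lemma t k : sumR (map PR (ins t k)) = (2 * nl t + 4) * PR t + SR t + C2 (nl t).
Proof.
  induction t as [j|a IHa b IHb].
  - simpl. unfold sumR, nl, C2; simpl. lra.
  - cbn [ins map]. unfold sumR at 1. cbn [fold_right]. fold (sumR (map PR (map (fun x => Node x b) (ins a k) ++ map (fun x => Node a x) (ins b k)))).
    rewrite map_app, sumR_app, !map_map.
    rewrite (sumR_ext _ (fun x => 1 * PR x + (C2 (nl a + 1) + C2 (nl b) + PR b))).
    2:{ intros x Hx. simpl. rewrite (nl_ins _ _ _ Hx). lra. }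
    rewrite (sumR_ext (fun x => PR (Node a x)) (fun x => 1 * PR x + (C2 (nl a) + PR a + C2 (nl b + 1)))).
    2:{ intros x Hx. simpl. rewrite (nl_ins _ _ _ Hx). lra. }
    rewrite !sumR_lin, !sumR_const, !len_ins, IHa, IHb.
    simpl PR. simpl SR. rewrite !nl_node.
    replace (nl (Leaf k)) with 1 by (unfold nl; simpl; lra). unfold C2. field.
Qed.

Lemma Cn_nl n t : (1 <= n)%nat -> In t (Cn n) -> nl t = INR n.
Proof. intros Hn H. unfold nl. rewrite (BT_length n t); auto. apply (Cn_prop n t Hn H). Qed.

Definition Dn (n : nat) : R := INR (dfact (2 * n - 3)).
Definition En (n : nat) : R := INR (dfact (2 * n - 2)).

Lemma Dn_S p : (1 <= p)%nat -> Dn (S p) = (2 * INR p - 1) * Dn p.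
Proof.
  intros Hp. unfold Dn. destruct p as [|[|q]]. lia. simpl. lra.
  replace (2 * S (S (S q)) - 3)%nat with (S (S (2 * S (S q) - 3))) by lia.
  rewrite dfact_SS, mult_INR. f_equal.
  replace (S (S (2 * S (S q) - 3))) with (2 * S (S q) - 1)%nat by lia.
  rewrite minus_INR by lia. rewrite mult_INR. simpl. lra.
Qed.

Lemma En_S p : (1 <= p)%nat -> En (S p) = 2 * INR p * En p.
Proof.
  intros Hp. unfold En. destruct p as [|q]. lia.
  replace (2 * S (S q) - 2)%nat with (S (S (2 * S q - 2))) by lia.
  rewrite dfact_SS, mult_INR. f_equal.
  replace (S (S (2 * S q - 2))) with (2 * S q)%nat by lia.
  rewrite mult_INR. simpl. lra.
Qed.

Lemma Cn_len_R n : (1 <= n)%nat -> INR (length (Cn n)) = Dn n.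
Proof. intros; unfold Dn; rewrite Cn_length; auto. Qed.

Lemma totals n : (1 <= n)%nat ->
  sumR (map SR (Cn n)) = INR n * (En n - Dn n) /\
  sumR (map PR (Cn n)) = C2 (INR n) * (En n / 2 - Dn n).
Proof.
  induction n as [|p IH]; intros Hn. lia.
  destruct (Nat.eq_dec p 0) as [->|Hp].
  - unfold En, Dn, C2, sumR; simpl. split; lra.
  - destruct IH as [IS IP]. lia.
    rewrite Cn_S by lia. rewrite !sumR_flat_map.
    rewrite (sumR_ext (fun t => sumR (map SR (ins t (S p)))) (fun t => (2 * INR p + 2) * SR t + (INR p + 1))).
    2:{ intros t Ht. rewrite IS_lemma, (Cn_nl p t) by (auto; lia). ring. }
    rewrite (sumR_ext (fun t => sumR (map PR (ins t (S p)))) (fun t => (2 * INR p + 4) * PR t + (SR t + C2 (INR p)))).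
    2:{ intros t Ht. rewrite IP_lemma, (Cn_nl p t) by (auto; lia). ring. }
    rewrite !sumR_lin, !sumR_plus, !sumR_const, Cn_len_R, IS, IP, Dn_S, En_S by lia.
    rewrite S_INR. unfold C2. split; field.
Qed.

Definition ind (L : list nat) (i : nat) : R := if existsb (Nat.eqb i) L then 1 else 0.
Definition PS (f : nat -> nat -> R) (n : nat) : R :=
  sumR (map (fun i => sumR (map (f i) (seq (S i) (n - i)))) (seq 1 n)).

Lemma PS_ext f g n : (forall i j, f i j = g i j) -> PS f n = PS g n.
Proof. intros H. unfold PS. f_equal. apply map_ext. intros i. f_equal. apply map_ext. auto. Qed.

Lemma PS_plus f g n : PS (fun i j => f i j + g i j) n = PS f n + PS g n.
Proof.
  unfold PS. rewrite <- sumR_plus. f_equal. apply map_ext. intros i. apply sumR_plus.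
Qed.

Lemma sumR_zero {A} (l : list A) : sumR (map (fun _ => 0) l) = 0.
Proof. rewrite sumR_const. lra. Qed.

Lemma PS_zero n : PS (fun _ _ => 0) n = 0.
Proof.
  unfold PS. rewrite (sumR_ext _ (fun _ => 0)). apply sumR_zero. intros; apply sumR_zero.
Qed.

Lemma sumR_scal {A} (f : A -> R) c l : sumR (map (fun x => c * f x) l) = c * sumR (map f l).
Proof. induction l; unfold sumR in *; simpl; try rewrite IHl; lra. Qed.

Lemma Phi_PS n t : INR (Phi n t) = PS (fun i j => INR (lca_depth t i j)) n.
Proof.
  unfold Phi, PS. rewrite INR_fold_plus, sumR_flat_map. f_equal. apply map_ext. intros i.
  rewrite map_map. reflexivity.
Qed.

Lemma lca_zero t i j : ~ (In i (leaves t) /\ In j (leaves t)) -> lca_depth t i j = 0%nat.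
Proof.
  destruct t as [k|a b]; simpl; auto. intros H.
  destruct (existsb (Nat.eqb i) (leaves a)) eqn:E1; destruct (existsb (Nat.eqb j) (leaves a)) eqn:E2; simpl;
  destruct (existsb (Nat.eqb i) (leaves b)) eqn:E3; destruct (existsb (Nat.eqb j) (leaves b)) eqn:E4; simpl; auto;
  exfalso; apply H; rewrite ?mem_In in *; split; apply in_or_app; auto.
Qed.

Lemma lca_node a b i j : NoDup (leaves (Node a b)) ->
  INR (lca_depth (Node a b) i j) = ind (leaves a) i * ind (leaves a) j + ind (leaves b) i * ind (leaves b) j
    + INR (lca_depth a i j) + INR (lca_depth b i j).
Proof.
  intros Hnd. simpl in Hnd. unfold ind. simpl lca_depth.
  destruct (existsb (Nat.eqb i) (leaves a)) eqn:E1; destruct (existsb (Nat.eqb j) (leaves a)) eqn:E2;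
  destruct (existsb (Nat.eqb i) (leaves b)) eqn:E3; destruct (existsb (Nat.eqb j) (leaves b)) eqn:E4; cbn [andb];
  try (exfalso; rewrite mem_In in E1, E3; eapply NoDup_app_disj; eauto; fail);
  try (exfalso; rewrite mem_In in E2, E4; eapply NoDup_app_disj; eauto; fail);
  repeat match goal with
  | |- context [lca_depth ?t i j] =>
      match goal with
      | H1 : existsb (Nat.eqb i) (leaves t) = false |- _ =>
          rewrite (lca_zero t i j) by (intros [X Y]; rewrite <- mem_In in X, Y; congruence)
      | H1 : existsb (Nat.eqb j) (leaves t) = false |- _ =>
          rewrite (lca_zero t i j) by (intros [X Y]; rewrite <- mem_In in X, Y; congruence)
      end
  end; rewrite ?S_INR; simpl INR; lra.
Qed.

Lemma pair_count (g : nat -> R) m a : (forall i, g i = 0 \/ g i = 1) ->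
  sumR (map (fun i => g i * sumR (map g (seq (S i) (a + m - 1 - i)))) (seq a m)) = C2 (sumR (map g (seq a m))).
Proof.
  intros Hg. revert a; induction m as [|m IH]; intros a.
  - unfold sumR, C2; simpl. lra.
  - cbn [seq map]. unfold sumR at 1 3. cbn [fold_right]. fold (sumR (map g (seq (S a) m))).
    fold (sumR (map (fun i => g i * sumR (map g (seq (S i) (a + S m - 1 - i)%nat))) (seq (S a) m))).
    replace (a + S m - 1 - a)%nat with m by lia.
    rewrite (sumR_ext (fun i => g i * sumR (map g (seq (S i) (a + S m - 1 - i)%nat))) (fun i => g i * sumR (map g (seq (S i) (S a + m - 1 - i)%nat)))) .
    2:{ intros i Hi. replace (a + S m - 1 - i)%nat with (S a + m - 1 - i)%nat by lia; reflexivity. }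
    rewrite IH. unfold C2. replace (sumR (g a :: map g (seq (S a) m))) with (g a + sumR (map g (seq (S a) m))) by reflexivity. destruct (Hg a) as [-> | ->]; field.
Qed.

Lemma sumR_cons x l : sumR (x :: l) = x + sumR l.
Proof. reflexivity. Qed.

Lemma ind_single_notin l X : ~ In l X -> sumR (map (ind [l]) X) = 0.
Proof.
  induction X; intros H. reflexivity. cbn [map]. rewrite sumR_cons, IHX.
  unfold ind; simpl. destruct (Nat.eqb a l) eqn:E. apply Nat.eqb_eq in E; subst. simpl in H; tauto.
  simpl. lra. simpl in H; tauto.
Qed.

Lemma ind_single l X : NoDup X -> In l X -> sumR (map (ind [l]) X) = 1.
Proof.
  induction X; intros Hnd H; simpl in H. tauto. inversion Hnd; subst.
  cbn [map]. rewrite sumR_cons. unfold ind at 1; simpl.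
  destruct (Nat.eqb a l) eqn:E.
  - apply Nat.eqb_eq in E; subst. rewrite ind_single_notin; auto. simpl; lra.
  - apply Nat.eqb_neq in E. destruct H as [->|H]. tauto. rewrite IHX; auto. simpl; lra.
Qed.

Lemma ind_sum L X : NoDup X -> NoDup L -> incl L X -> sumR (map (ind L) X) = INR (length L).
Proof.
  intros HX. induction L as [|l L IH]; intros HL Hinc.
  - rewrite (sumR_ext _ (fun _ => 0)). rewrite sumR_zero. reflexivity. intros; unfold ind; reflexivity.
  - inversion HL; subst.
    rewrite (sumR_ext _ (fun x => ind [l] x + ind L x)).
    + rewrite sumR_plus, ind_single, IH; auto. simpl length. rewrite S_INR. lra.
      intros x Hx; apply Hinc; simpl; auto. apply Hinc; simpl; auto.
    + intros x Hx. unfold ind; simpl. destruct (Nat.eqb x l) eqn:E; simpl.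
      * apply Nat.eqb_eq in E; subst. destruct (existsb (Nat.eqb l) L) eqn:E2; try lra.
        apply mem_In in E2; tauto.
      * destruct (existsb (Nat.eqb x) L); lra.
Qed.

Lemma ind01 L i : ind L i = 0 \/ ind L i = 1.
Proof. unfold ind; destruct (existsb (Nat.eqb i) L); auto. Qed.

Lemma PS_count L n : NoDup L -> incl L (seq 1 n) ->
  PS (fun i j => ind L i * ind L j) n = C2 (INR (length L)).
Proof.
  intros HL Hinc. unfold PS.
  rewrite (sumR_ext _ (fun i => ind L i * sumR (map (ind L) (seq (S i) (1 + n - 1 - i))))).
  - rewrite pair_count by apply ind01. rewrite ind_sum; auto. apply seq_NoDup.
  - intros i _. rewrite sumR_scal. do 4 f_equal. lia.
Qed.

Lemma W_lemma n t : NoDup (leaves t) -> incl (leaves t) (seq 1 n) ->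
  PS (fun i j => INR (lca_depth t i j)) n = PR t.
Proof.
  induction t as [k|a IHa b IHb]; intros Hnd Hinc.
  - simpl. apply PS_zero.
  - rewrite (PS_ext _ (fun i j => (ind (leaves a) i * ind (leaves a) j + ind (leaves b) i * ind (leaves b) j)
        + (INR (lca_depth a i j) + INR (lca_depth b i j)))).
    2:{ intros i j. rewrite lca_node; auto. lra. }
    simpl in Hnd, Hinc.
    assert (Na : NoDup (leaves a)) by (eapply NoDup_app_remove_r; eauto).
    assert (Nb : NoDup (leaves b)) by (eapply NoDup_app_remove_l; eauto).
    assert (Ia : incl (leaves a) (seq 1 n)) by (intros x Hx; apply Hinc, in_or_app; auto).
    assert (Ib : incl (leaves b) (seq 1 n)) by (intros x Hx; apply Hinc, in_or_app; auto).
    rewrite !PS_plus, !PS_count, IHa, IHb by auto.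
    simpl. unfold nl. lra.
Qed.

Lemma Phi_PR n t : is_BT n t -> INR (Phi n t) = PR t.
Proof.
  intros H. rewrite Phi_PS. apply W_lemma. eapply BT_NoDup; eauto.
  intros x Hx. eapply Permutation_in; eauto.
Qed.

Lemma dfact_pos2 m : (0 < dfact m /\ 0 < dfact (S m))%nat.
Proof. induction m. simpl; lia. split. tauto. rewrite dfact_SS. lia. Qed.

Lemma dfact_pos m : (0 < dfact m)%nat.
Proof. apply dfact_pos2. Qed.

Lemma mean_Cn n : (1 <= n)%nat -> mean_Phi n (Cn n) = C2 (INR n) * (En n / (2 * Dn n) - 1).
Proof.
  intros Hn. unfold mean_Phi. fold (sumR (map (fun t => INR (Phi n t)) (Cn n))).
  rewrite (sumR_ext _ PR). 2:{ intros t Ht. apply Phi_PR. apply (Cn_prop n t Hn Ht). }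
  rewrite (proj2 (totals n Hn)), Cn_len_R by auto.
  assert (Dn n > 0) by (unfold Dn; apply lt_0_INR, dfact_pos).
  field. lra.
Qed.

Open Scope R_scope.

Fixpoint bb (m k : nat) : R :=
  match k with
  | O => 1
  | S k' => bb m k' * (2 * (INR m - INR k') / (2 * INR m - INR k'))
  end.

Lemma telescope (T : nat -> R) N : sum_f_R0 (fun k => T k - T (S k)) N = T O - T (S N).
Proof. induction N; simpl. lra. rewrite IHN. lra. Qed.

Lemma bb_end m : bb m (S m) = 0.
Proof. simpl. replace (INR m - INR m) with 0 by lra. unfold Rdiv. ring. Qed.

Lemma sum_weighted m : (1 <= m)%nat ->
  sum_f_R0 (fun k => ((INR k + 1) ^ 2 - 2 * INR m - 2) * bb m k) m = - (2 * INR m + 1).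
Proof.
  intros Hm.
  set (T := fun k => (INR k - 1) * (2 * INR m + 1 - INR k) * bb m k).
  rewrite (sum_eq _ (fun k => T k - T (S k))).
  - rewrite telescope. unfold T. rewrite bb_end. simpl. lra.
  - intros k Hk. unfold T. simpl bb. rewrite S_INR.
    assert (INR k <= INR m) by (apply le_INR; auto).
    assert (1 <= INR m) by (apply (le_INR 1); auto).
    field. lra.
Qed.

Lemma R2 m k : (1 <= m)%nat -> (k <= S m)%nat ->
  bb m k * (INR m + 1) * (2 * INR m + 2 - INR k) * (2 * INR m + 1 - INR k)
  = bb (S m) k * (INR m + 1 - INR k) * (2 * INR m + 2) * (2 * INR m + 1).
Proof.
  intros Hm. induction k as [|k IH]; intros Hk.
  - simpl. ring.
  - assert (Hk' : INR k <= INR m) by (apply le_INR; lia).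
    assert (1 <= INR m) by (apply (le_INR 1); auto).
    specialize (IH ltac:(lia)).
    cbn [bb]. rewrite !S_INR. rewrite ?S_INR in IH.
    set (X := bb m k) in *. set (Y := bb (S m) k) in *.
    transitivity (2 * (INR m - INR k) / (2 * INR m + 2 - INR k) *
                  (Y * (INR m + 1 - INR k) * (2 * INR m + 2) * (2 * INR m + 1))).
    2:{ field. lra. }
    rewrite <- IH. field. lra.
Qed.

Lemma WZ_point m k : (1 <= m)%nat -> (k <= S m)%nat ->
  let G := fun k => - INR k * (2 * INR m + 1) * bb (S m) k / (2 * (INR m + 1) * (2 * INR m + 2 - INR k)) in
  bb (S m) k * (2 * INR m + 1) / (2 * INR m + 2) - bb m k = G (S k) - G k.
Proof.
  intros Hm Hk G. unfold G.
  assert (Hk' : INR k <= INR m + 1) by (rewrite <- S_INR; apply le_INR; lia).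
  assert (1 <= INR m) by (apply (le_INR 1); auto).
  pose proof (R2 m k Hm Hk) as HR.
  cbn [bb]. rewrite !S_INR. rewrite ?S_INR in HR.
  assert (Hb : bb m k = bb (S m) k * (INR m + 1 - INR k) * (2 * INR m + 2) * (2 * INR m + 1) /
      ((INR m + 1) * (2 * INR m + 2 - INR k) * (2 * INR m + 1 - INR k))).
  { rewrite <- HR. field. repeat split; lra. }
  rewrite Hb. field. repeat split; lra.
Qed.

Definition w (m : nat) : R := INR (dfact (2 * m)) / INR (dfact (2 * m - 1)).

Ltac nr := repeat (rewrite ?S_INR, ?mult_INR, ?plus_INR, ?INR_0, ?INR_1).

Lemma w_S m : w (S m) = w m * (2 * INR m + 2) / (2 * INR m + 1).
Proof.
  unfold w. replace (2 * S m)%nat with (S (S (2 * m))) by lia.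
  replace (S (S (2 * m)) - 1)%nat with (S (2 * m)) by lia.
  rewrite dfact_SS.
  destruct m as [|m].
  - simpl. lra.
  - replace (S (2 * S m)) with (S (S (2 * S m - 1))) by lia. rewrite dfact_SS.
    rewrite !mult_INR.
    replace (INR (S (S (2 * S m)))) with (2 * INR (S m) + 2) by (nr; lra).
    replace (INR (S (S (2 * S m - 1)))) with (2 * INR (S m) + 1).
    2:{ replace (S (S (2 * S m - 1))) with (S (2 * S m)) by lia. nr; lra. }
    pose proof (dfact_pos (2 * S m - 1)). pose proof (lt_0_INR _ H).
    pose proof (pos_INR (S m)). replace (INR (S (S (S (2 * S m - 1))))) with (2 * INR (S m) + 2) by (replace (S (S (S (2 * S m - 1)))) with (S (S (2 * S m))) by lia; nr; lra). field. lra.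
Qed.

Lemma sum_bb m : sum_f_R0 (bb m) m = w m.
Proof.
  induction m as [|m IH].
  - simpl. unfold w. simpl. lra.
  - destruct (Nat.eq_dec m 0) as [->|Hm].
    + simpl. unfold w. simpl. lra.
    + assert (Hm1 : (1 <= m)%nat) by lia.
      set (G := fun k => - INR k * (2 * INR m + 1) * bb (S m) k / (2 * (INR m + 1) * (2 * INR m + 2 - INR k))).
      assert (H := sum_eq _ _ (S m) (fun k Hk => WZ_point m k Hm1 Hk)).
      cbv zeta in H. fold G in H.
      rewrite (sum_eq (fun k => G (S k) - G k) (fun k => (fun j => - G j) k - (fun j => - G j) (S k))) in H by (intros; ring).
      rewrite telescope in H.
      assert (G (S (S m)) = 0). { unfold G. rewrite bb_end. unfold Rdiv. ring. }
      assert (G 0%nat = 0). { unfold G. simpl. unfold Rdiv. ring. }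
      rewrite (sum_eq _ (fun k => bb (S m) k * (2 * INR m + 1) / (2 * INR m + 2) + (- bb m k))) in H.
      2:{ intros; unfold Rminus; reflexivity. }
      rewrite sum_plus in H.
      rewrite (sum_eq _ (fun k => bb (S m) k * ((2 * INR m + 1) / (2 * INR m + 2)))) in H.
      2:{ intros; unfold Rdiv; ring. }
      rewrite <- scal_sum in H.
      rewrite (sum_eq (fun k => - bb m k) (fun k => bb m k * (-1))) in H.
      2:{ intros; ring. }
      rewrite <- scal_sum in H. rewrite (tech5 (bb m) m), bb_end, IH, H0, H1 in H.
      rewrite w_S.
      assert (1 <= INR m) by (apply (le_INR 1); auto).
      apply (Rmult_eq_reg_l ((2 * INR m + 1) / (2 * INR m + 2))).
      2:{ apply Rgt_not_eq. apply Rlt_gt. apply Rdiv_lt_0_compat; lra. }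
      transitivity (w m). 2:{ field. lra. }
      lra.
Qed.

Lemma poch1 k : poch 1 k = INR (fact k).
Proof. induction k; simpl poch. simpl; lra. rewrite IHk. cbn [fact]. rewrite mult_INR, S_INR. ring. Qed.

Lemma poch2 k : poch 2 k = (INR k + 1) * INR (fact k).
Proof. induction k; simpl poch. simpl; lra. rewrite IHk. cbn [fact]. rewrite mult_INR, !S_INR. ring. Qed.

Lemma poch_ratio m k : (1 <= m)%nat -> (k <= m)%nat ->
  poch (- 2 * INR m) k <> 0 /\ poch (- INR m) k * 2 ^ k = bb m k * poch (- 2 * INR m) k.
Proof.
  intros Hm. induction k as [|k IH]; intros Hk.
  - simpl. split; lra.
  - destruct (IH ltac:(lia)) as [H1 H2].
    assert (INR k + 1 <= INR m) by (rewrite <- S_INR; apply le_INR; auto).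
    assert (1 <= INR m) by (apply (le_INR 1); auto).
    cbn [poch bb pow]. split.
    + apply Rmult_integral_contrapositive. split; auto. lra.
    + transitivity (poch (- INR m) k * 2 ^ k * (2 * (- INR m + INR k))). ring.
      rewrite H2. field. lra.
Qed.

Lemma F32_closed n : (3 <= n)%nat -> F32 n = (2 * INR n - 3) * (En n / Dn n - 1).
Proof.
  intros Hn. set (m := (n - 2)%nat).
  assert (Hnm : n = (m + 2)%nat) by lia. assert (Hm : (1 <= m)%nat) by lia.
  assert (Rm : INR n = INR m + 2) by (rewrite Hnm, plus_INR; simpl; lra).
  unfold F32. fold m.
  rewrite (sum_eq _ (fun k => ((INR k + 1) ^ 2 - 2 * INR m - 2) * bb m k + (2 * INR m + 2) * bb m k)).
  2:{ intros k Hk. destruct (poch_ratio m k Hm Hk) as [H1 H2].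
      rewrite !poch1, !poch2. rewrite Rm.
      replace (2 - (INR m + 2)) with (- INR m) by ring.
      replace (4 - 2 * (INR m + 2)) with (- 2 * INR m) by ring.
      pose proof (fact_neq_0 k). assert (INR (fact k) <> 0) by (apply not_0_INR; auto).
      transitivity ((INR k + 1) ^ 2 * (poch (- INR m) k * 2 ^ k) / poch (- 2 * INR m) k).
      field. auto. rewrite H2. field. auto. }
  rewrite sum_plus, sum_weighted by auto.
  rewrite (sum_eq (fun k => (2 * INR m + 2) * bb m k) (fun k => bb m k * (2 * INR m + 2))) by (intros; ring).
  rewrite <- scal_sum, sum_bb.
  unfold En, Dn, w. rewrite Hnm.
  replace (2 * (m + 2) - 2)%nat with (S (S (2 * m))) by lia.
  replace (2 * (m + 2) - 3)%nat with (S (S (2 * m - 1))) by lia.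
  rewrite !dfact_SS, !mult_INR.
  replace (INR (S (S (2 * m)))) with (2 * INR m + 2) by (nr; lra).
  replace (INR (S (S (2 * m - 1)))) with (2 * INR m + 1).
  2:{ replace (S (S (2 * m - 1))) with (S (2 * m)) by lia. nr; lra. }
  rewrite plus_INR. replace (INR 2) with 2 by (simpl; lra).
  pose proof (lt_0_INR _ (dfact_pos (2 * m - 1))).
  assert (1 <= INR m) by (apply (le_INR 1); auto).
  field. split; lra.
Qed.

Module Wallis.
Import Coquelicot.Coquelicot.
Open Scope R_scope.
Open Scope R_scope.

Definition Iw (k : nat) : R := RInt (fun x => sin x ^ k) 0 (PI / 2).

Lemma ex_Iw k : ex_RInt (fun x => sin x ^ k) 0 (PI / 2).
Proof. apply (@ex_RInt_continuous R_CompleteNormedModule). intros z _. apply (@ex_derive_continuous R_AbsRing R_NormedModule). auto_derive. auto. Qed.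

Lemma Iw_rec k : (INR k + 2) * Iw (S (S k)) = (INR k + 1) * Iw k.
Proof.
  assert (H : is_RInt (fun x => (INR k + 2) * sin x ^ (S (S k)) - (INR k + 1) * sin x ^ k) 0 (PI / 2)
              (minus ((fun x => - cos x * sin x ^ S k) (PI / 2)) ((fun x => - cos x * sin x ^ S k) 0))).
  { apply (@is_RInt_derive R_CompleteNormedModule (fun x => - cos x * sin x ^ S k)).
    - intros x _. auto_derive. auto.
      change (match k with 0%nat => 1 | S _ => INR k + 1 end) with (INR (S k)). rewrite S_INR.
      pose proof (sin2_cos2 x) as E. unfold Rsqr in E.
      replace (sin x ^ S (S k)) with (sin x * sin x * sin x ^ k) by (simpl; ring).
      replace (sin x * sin x ^ k) with (sin x ^ S k) by reflexivity.
      replace (sin x ^ S k) with (sin x * sin x ^ k) by reflexivity.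
      replace (cos x) with (cos x) by reflexivity.
      assert (cos x * cos x = 1 - sin x * sin x) by lra.
      transitivity (sin x * sin x * sin x ^ k - (cos x * cos x) * (INR k + 1) * sin x ^ k). ring.
      rewrite H. ring.
    - intros x _. apply (@ex_derive_continuous R_AbsRing R_NormedModule). auto_derive. auto. }
  cbv beta in H. rewrite cos_PI2, sin_0 in H.
  replace (minus (- 0 * sin (PI/2) ^ S k) (- cos 0 * 0 ^ S k)) with 0 in H
    by (unfold minus, plus, opp; simpl; ring).
  apply (@is_RInt_unique R_CompleteNormedModule) in H.
  rewrite (RInt_ext _ (fun x => minus (scal (INR k + 2) (sin x ^ S (S k))) (scal (INR k + 1) (sin x ^ k)))) in H.
  2:{ intros; reflexivity. }
  rewrite (@RInt_minus R_CompleteNormedModule) in H.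
  2,3: apply (@ex_RInt_scal R_CompleteNormedModule); apply ex_Iw.
  rewrite !(@RInt_scal R_CompleteNormedModule) in H by apply ex_Iw.
  unfold Iw. unfold minus, plus, opp, scal in H; simpl in H. unfold mult in H; simpl in H. simpl. lra.
Qed.

Lemma Iw0 : Iw 0 = PI / 2.
Proof.
  unfold Iw. simpl pow. rewrite (@RInt_const R_CompleteNormedModule). unfold scal; simpl. unfold mult; simpl. lra.
Qed.

Lemma Iw1 : Iw 1 = 1.
Proof.
  unfold Iw.
  assert (H : is_RInt (fun x => sin x) 0 (PI / 2) (minus ((fun x => - cos x) (PI / 2)) ((fun x => - cos x) 0))).
  { apply (@is_RInt_derive R_CompleteNormedModule (fun x => - cos x)).
    - intros x _. auto_derive. auto. ring.
    - intros x _. apply (@ex_derive_continuous R_AbsRing R_NormedModule). auto_derive. auto. }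
  cbv beta in H. rewrite cos_PI2, cos_0 in H.
  apply (@is_RInt_unique R_CompleteNormedModule) in H.
  transitivity (RInt (fun x => sin x) 0 (PI / 2)). apply RInt_ext; intros; simpl; ring.
  rewrite H. unfold minus, plus, opp; simpl. ring.
Qed.

Lemma Iw_mono k : Iw (S k) <= Iw k.
Proof.
  unfold Iw. apply RInt_le.
  - pose proof PI_RGT_0. lra.
  - apply ex_Iw.
  - apply ex_Iw.
  - intros x Hx. pose proof PI_RGT_0.
    assert (0 <= sin x) by (apply sin_ge_0; lra).
    assert (sin x <= 1) by apply SIN_bound.
    assert (0 <= sin x ^ k) by (apply pow_le; auto).
    simpl. nra.
Qed.

Lemma w_pos m : 0 < w m.
Proof.
  unfold w. apply Rdiv_lt_0_compat; apply lt_0_INR, dfact_pos.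
Qed.

Lemma Iw_closed m : Iw (2 * m) = PI / (2 * w m) /\ Iw (S (2 * m)) = w m / (2 * INR m + 1).
Proof.
  induction m as [|m [IH1 IH2]].
  - simpl. rewrite Iw0, Iw1. unfold w; simpl. split; field.
  - pose proof (w_pos m). pose proof (pos_INR m).
    replace (2 * S m)%nat with (S (S (2 * m))) by lia. split.
    + pose proof (Iw_rec (2 * m)) as HR. rewrite IH1 in HR. rewrite mult_INR in HR.
      replace (INR 2) with 2 in HR by (simpl; lra).
      assert (E : Iw (S (S (2 * m))) = (2 * INR m + 1) * (PI / (2 * w m)) / (2 * INR m + 2))
        by (rewrite <- HR; field; lra).
      rewrite E, w_S. field. split; lra.
    + pose proof (Iw_rec (S (2 * m))) as HR. rewrite IH2 in HR. rewrite S_INR, mult_INR in HR.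
      replace (INR 2) with 2 in HR by (simpl; lra).
      assert (E : Iw (S (S (S (2 * m)))) = (2 * INR m + 1 + 1) * (w m / (2 * INR m + 1)) / (2 * INR m + 1 + 2))
        by (rewrite <- HR; field; lra).
      rewrite E, w_S, S_INR. field. split; lra.
Qed.

Lemma wallis_bounds m : (1 <= m)%nat -> PI * INR m <= w m ^ 2 <= PI * (INR m + / 2).
Proof.
  intros Hm. pose proof (w_pos m). pose proof PI_RGT_0. split.
  - destruct m as [|m]. lia.
    pose proof (Iw_mono (S (2 * m))) as M.
    replace (S (S (2 * m))) with (2 * S m)%nat in M by lia.
    rewrite (proj1 (Iw_closed (S m))), (proj2 (Iw_closed m)) in M.
    rewrite w_S in M. pose proof (w_pos m). pose proof (pos_INR m).
    rewrite w_S. rewrite S_INR.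
    set (a := w m) in *. set (x := INR m) in *.
    assert (Hw : 0 < a * (2 * x + 2) / (2 * x + 1)) by (apply Rdiv_lt_0_compat; nra).
    apply Rmult_le_compat_r with (r := a * (2 * x + 2) / (2 * x + 1)) in M; [|lra].
    replace (PI / (2 * (a * (2 * x + 2) / (2 * x + 1))) * (a * (2 * x + 2) / (2 * x + 1))) with (PI / 2) in M
      by (field; lra).
    replace (a * (2 * x + 2) / (2 * x + 1) / (2 * x + 1 + 2) * (a * (2 * x + 2) / (2 * x + 1)))
      with ((a * (2 * x + 2) / (2 * x + 1)) ^ 2 / (2 * x + 3)) in M by (field; lra).
    apply Rmult_le_compat_r with (r := 2 * x + 3) in M; [|lra].
    replace ((a * (2 * x + 2) / (2 * x + 1)) ^ 2 / (2 * x + 3) * (2 * x + 3))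
      with ((a * (2 * x + 2) / (2 * x + 1)) ^ 2) in M by (field; lra).
    nra.
  - pose proof (Iw_mono (2 * m)) as M.
    rewrite (proj1 (Iw_closed m)), (proj2 (Iw_closed m)) in M. pose proof (pos_INR m).
    apply Rmult_le_compat_r with (r := 2 * w m * (2 * INR m + 1)) in M; [|nra].
    replace (w m / (2 * INR m + 1) * (2 * w m * (2 * INR m + 1))) with (2 * w m ^ 2) in M by (field; lra).
    replace (PI / (2 * w m) * (2 * w m * (2 * INR m + 1))) with (PI * (2 * INR m + 1)) in M by (field; lra).
    lra.
Qed.

End Wallis.
Import Wallis.
Open Scope R_scope.

Lemma C_n_2 n : (2 <= n)%nat -> C n 2 = C2 (INR n).
Proof.
  intros Hn. destruct n as [|[|p]]; try lia. unfold C, C2.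
  replace (S (S p) - 2)%nat with p by lia.
  cbn [fact]. rewrite !mult_INR. rewrite !S_INR. simpl (INR (fact 2)).
  pose proof (lt_0_INR _ (lt_O_fact p)). rewrite INR_0. field. lra.
Qed.

Lemma INR_ge3 n : (3 <= n)%nat -> 3 <= INR n.
Proof. intros H. replace 3 with (INR 3) by (simpl; lra). apply le_INR; auto. Qed.

Lemma EU_Cn n : (3 <= n)%nat -> mean_Phi n (Cn n) = EU_formula n.
Proof.
  intros Hn. rewrite mean_Cn by lia. unfold EU_formula. rewrite C_n_2 by lia.
  rewrite F32_closed by auto. fold (En n). fold (Dn n).
  assert (INR n >= 3) by (apply Rle_ge, INR_ge3; auto).
  assert (Dn n > 0) by (unfold Dn; apply lt_0_INR, dfact_pos).
  field. lra.
Qed.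

Lemma part1 n : (3 <= n)%nat -> EU_Phi_is n (EU_formula n).
Proof.
  intros Hn. split.
  - exists (Cn n). apply enum_Cn. lia.
  - intros l Hl. rewrite mean_enum by (auto; lia). apply EU_Cn; auto.
Qed.

Lemma EnDn_w n : (2 <= n)%nat -> En n / Dn n = w (n - 1).
Proof.
  intros Hn. unfold En, Dn, w. f_equal; f_equal; f_equal; lia.
Qed.

Lemma ratio_bound n : (3 <= n)%nat ->
  let x := INR n in
  Rabs (C2 x * (w (n - 1) / 2 - 1) / (sqrt PI / 4 * Rpower x (5 / 2)) - 1) <= 4 / sqrt x.
Proof.
  intros Hn x.
  assert (Hx : 3 <= x) by (apply INR_ge3; auto).
  assert (Hxm : INR (n - 1) = x - 1) by (unfold x; rewrite minus_INR by lia; simpl; lra).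
  destruct (wallis_bounds (n - 1) ltac:(lia)) as [Wl Wu]. rewrite Hxm in Wl, Wu.
  pose proof (w_pos (n - 1)) as Wp. set (W := w (n - 1)) in *.
  assert (Rp : Rpower x (5 / 2) = x ^ 2 * sqrt x).
  { replace (5 / 2) with (INR 2 + / 2) by (simpl; lra).
    rewrite Rpower_plus, Rpower_pow, Rpower_sqrt by lra. reflexivity. }
  rewrite Rp.
  pose proof PI_RGT_0 as Hpi. pose proof PI_4.
  set (s := sqrt x). set (p := sqrt PI).
  assert (Hs : s * s = x) by (apply sqrt_sqrt; lra).
  assert (Hp2 : p * p = PI) by (apply sqrt_sqrt; lra).
  assert (Hs1 : 1 <= s) by (unfold s; rewrite <- sqrt_1; apply sqrt_le_1; lra).
  assert (Hp1 : 1 <= p).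
  { unfold p; rewrite <- sqrt_1; apply sqrt_le_1; try lra. pose proof PI2_1. lra. }
  assert (HWu : W <= p * s).
  { apply Rsqr_incr_0_var. unfold Rsqr. replace (p * s * (p * s)) with (PI * x) by (rewrite <- Hp2, <- Hs; ring).
    nra. nra. }
  assert (HWl : p * s - p <= W).
  { destruct (Rle_dec (p * s - p) 0). lra.
    apply Rsqr_incr_0_var. unfold Rsqr.
    assert ((p * s - p) * (p * s - p) <= PI * (x - 1)).
    { rewrite <- Hp2, <- Hs. nra. }
    nra. lra. }
  assert (Hps : 0 < p * x * s) by (apply Rmult_lt_0_compat; nra).
  replace (C2 x * (W / 2 - 1) / (p / 4 * (x ^ 2 * s))) with ((x - 1) * (W - 2) / (p * x * s)).
  2:{ unfold C2. field. repeat split; nra. }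
  assert (U : (x - 1) * (W - 2) / (p * x * s) <= 1).
  { apply (Rmult_le_reg_r (p * x * s)); auto. unfold Rdiv. rewrite Rmult_assoc, Rinv_l by lra.
    rewrite <- Hs in *. nra. }
  assert (L : 1 - 4 / s <= (x - 1) * (W - 2) / (p * x * s)).
  { apply (Rmult_le_reg_r (p * x * s)); auto. unfold Rdiv. rewrite (Rmult_assoc ((x - 1) * (W - 2))), Rinv_l by lra.
    rewrite Rmult_1_r. replace ((1 - 4 * / s) * (p * x * s)) with (p * x * s - 4 * p * x) by (field; lra).
    assert ((x - 1) * (W - 2) >= (x - 1) * (p * s - p - 2)) by nra.
    rewrite <- Hs in *. nra. }
  unfold Rabs. destruct (Rcase_abs _); lra.
Qed.

Lemma nat_unbounded r : exists N : nat, r < INR N.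
Proof.
  destruct (archimed r) as [H _]. exists (Z.abs_nat (up r)).
  rewrite INR_IZR_INZ, Zabs2Nat.id_abs.
  assert (IZR (up r) <= IZR (Z.abs (up r))) by (apply IZR_le; lia). lra.
Qed.

Theorem mainTheorem19 :
  (forall n : nat, (3 <= n)%nat -> EU_Phi_is n (EU_formula n)) /\
  (forall E : nat -> R,
     (forall n : nat, (3 <= n)%nat -> EU_Phi_is n (E n)) ->
     Un_cv (fun n => E n / (sqrt PI / 4 * Rpower (INR n) (5 / 2))) 1).
Proof.
  split. exact part1.
  intros E HE eps Heps.
  destruct (nat_unbounded (16 / (eps * eps))) as [N HN].
  exists (max N 3). intros n Hn.
  assert (H3 : (3 <= n)%nat) by lia.
  assert (En_val : E n = C2 (INR n) * (w (n - 1) / 2 - 1)).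
  { destruct (HE n H3) as [_ H]. rewrite <- (H (Cn n)) by (apply enum_Cn; lia).
    rewrite mean_Cn by lia. rewrite <- EnDn_w by lia.
    assert (Dn n > 0) by (unfold Dn; apply lt_0_INR, dfact_pos). field. lra. }
  unfold R_dist. rewrite En_val.
  eapply Rle_lt_trans. apply ratio_bound; auto.
  assert (Hx : INR N <= INR n) by (apply le_INR; lia).
  pose proof (INR_ge3 n H3).
  assert (Hs : 0 < sqrt (INR n)) by (apply sqrt_lt_R0; lra).
  assert (16 / (eps * eps) < INR n) by lra.
  assert (4 / eps < sqrt (INR n)).
  { apply Rsqr_incrst_0. unfold Rsqr. rewrite sqrt_sqrt by lra.
    replace (4 / eps * (4 / eps)) with (16 / (eps * eps)) by (field; lra). lra.
    apply Rlt_le, Rdiv_lt_0_compat; lra. lra. }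
  apply (Rmult_lt_reg_r (sqrt (INR n))); auto. unfold Rdiv. rewrite Rmult_assoc, Rinv_l by lra.
  apply (Rmult_lt_reg_r (/ eps)). apply Rinv_0_lt_compat; lra.
  replace (eps * sqrt (INR n) * / eps) with (sqrt (INR n)) by (field; lra). lra.
Qed.
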